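(* Suppose that either $r>\dfrac{\beta b}{m+\mu}$, or $\beta b(r-n)+rn(m+\mu)>0$. Then system (S) has an equilibrium of the form $E_5=\big(0,\,\tfrac{b}{m+\mu},\,M_5,\,N_5\big)$ with $M_5>0$ and $N_5>0$.
   Context: The model (S) is the system of ODEs for healthy bees $B$, infected bees $I$, healthy mites $M$ and infected mites $N$: $$B'=b\frac{B}{B+I}-\lambda BN-\gamma BI-mB,$$ $$I'=b\frac{I}{B+I}+\lambda BN+\gamma BI-(m+\mu)I,$$ $$M'=r\Big(1-\frac{M+N}{K}\Big)(M+N)-\beta MI-\delta MN-eMB,$$ $$N'=-nN-pN(N+M)+\beta MI+\delta MN-eNB,$$ where all parameters $b,\lambda,\gamma,m,\mu,r,K,\beta,\delta,e,n,p$ are positive constants. *)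

(* Defs.v *)
From Stdlib Require Import Reals.
Open Scope R_scope.

Definition fB (b lam gam m mu : R) (B I M N : R) : R :=
  b * (B / (B + I)) - lam * B * N - gam * B * I - m * B.

Definition fI (b lam gam m mu : R) (B I M N : R) : R :=
  b * (I / (B + I)) + lam * B * N + gam * B * I - (m + mu) * I.

Definition fM (r K beta delta e : R) (B I M N : R) : R :=
  r * (1 - (M + N) / K) * (M + N) - beta * M * I - delta * M * N - e * M * B.

Definition fN (n p beta delta e : R) (B I M N : R) : R :=
  - n * N - p * N * (N + M) + beta * M * I + delta * M * N - e * N * B.

Definition is_equilibrium (b lam gam m mu r K beta delta e n p : R)
  (B I M N : R) : Prop :=
  fB b lam gam m mu B I M N = 0 /\
  fI b lam gam m mu B I M N = 0 /\
  fM r K beta delta e B I M N = 0 /\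
  fN n p beta delta e B I M N = 0.

(* Main.v *)
Require Import Defs.
From Stdlib Require Import Reals Lra Psatz Ranalysis5.
Open Scope R_scope.

Theorem mainTheorem3 (b lam gam m mu r K beta delta e n p : R) :
  0 < b -> 0 < lam -> 0 < gam -> 0 < m -> 0 < mu -> 0 < r -> 0 < K ->
  0 < beta -> 0 < delta -> 0 < e -> 0 < n -> 0 < p ->
  (r > beta * b / (m + mu) \/ beta * b * (r - n) + r * n * (m + mu) > 0) ->
  exists M5 N5 : R, 0 < M5 /\ 0 < N5 /\
    is_equilibrium b lam gam m mu r K beta delta e n p
      0 (b / (m + mu)) M5 N5.
Proof.
  intros Hb Hl Hg Hm Hmu Hr HK Hbe Hd He Hn Hp Hc.
  set (I := b / (m + mu)).
  assert (HI : 0 < I) by (unfold I; apply Rdiv_lt_0_compat; lra).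
  assert (Hc2 : beta * I * (r - n) + r * n > 0).
  { destruct Hc as [Hc|Hc].
    - assert (beta * I < r) by (unfold I; lra).
      assert (beta * I * (r - n) + r * n = beta * I * r + n * (r - beta * I)) by ring.
      rewrite H0. assert (0 < beta * I * r) by (apply Rmult_lt_0_compat; nra).
      assert (0 < n * (r - beta * I)) by (apply Rmult_lt_0_compat; lra). lra.
    - assert (beta * I * (r - n) + r * n = (beta * b * (r - n) + r * n * (m + mu)) / (m + mu))
        by (unfold I; field; lra).
      rewrite H. apply Rdiv_lt_0_compat; lra. }
  set (q := fun S => r * (1 - S / K) / (n + p * S)).
  set (k := fun S => (1 - q S) * (beta * I + delta * S * q S) - r * (1 - S / K)).
  assert (Hk0 : k 0 < 0).
  { unfold k, q. replace (0 / K) with 0 by (field; lra).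
    replace (r * (1 - 0) / (n + p * 0)) with (r / n) by (field; lra).
    replace ((1 - r / n) * (beta * I + delta * 0 * (r / n)) - r * (1 - 0))
      with (- (beta * I * (r - n) + r * n) / n) by (field; lra).
    assert (0 < (beta * I * (r - n) + r * n) / n) by (apply Rdiv_lt_0_compat; lra).
    lra. }
  assert (HkK : 0 < k K).
  { unfold k, q. replace (K / K) with 1 by (field; lra).
    replace (r * (1 - 1) / (n + p * K)) with 0 by (field; nra).
    nra. }
  assert (Hcont : forall a, 0 <= a <= K -> continuity_pt k a).
  { intros a Ha. unfold k, q.
    assert (n + p * a <> 0) by nra.
    reg. }
  destruct (Ranalysis5.IVT_interv k 0 K Hcont HK Hk0 HkK) as [z [Hz Hkz]].
  assert (Hz0 : z <> 0) by (intro; subst; lra).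
  assert (HzK : z <> K) by (intro; subst; lra).
  assert (Hpos : 0 < n + p * z) by nra.
  set (qz := q z).
  assert (Hq : qz * (n + p * z) = r * (1 - z / K)) by (unfold qz, q; field; lra).
  assert (Hrz : 0 < 1 - z / K).
  { assert (z / K < 1). { apply (Rmult_lt_reg_r K); try lra. unfold Rdiv. rewrite Rmult_assoc, Rinv_l; lra. } lra. }
  assert (Hqpos : 0 < qz) by nra.
  assert (Hkz' : (1 - qz) * (beta * I + delta * z * qz) = r * (1 - z / K)) by (unfold k in Hkz; fold qz in Hkz; lra).
  set (N := z * qz). set (M := z - z * qz).
  assert (HN : 0 < N) by (unfold N; nra).
  assert (Heq : M * (beta * I + delta * N) = N * (n + p * z)).
  { unfold M, N. replace ((z - z * qz) * (beta * I + delta * (z * qz))) with (z * ((1 - qz) * (beta * I + delta * z * qz))) by ring.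
    rewrite Hkz'. replace (z * qz * (n + p * z)) with (z * (qz * (n + p * z))) by ring. rewrite Hq. ring. }
  assert (HM : 0 < M).
  { assert (0 < N * (n + p * z)) by nra.
    assert (0 < beta * I + delta * N) by nra. nra. }
  exists M, N. split; [exact HM|]. split; [exact HN|].
  assert (HS : M + N = z) by (unfold M, N; ring).
  unfold is_equilibrium, fB, fI, fM, fN. fold I.
  repeat split.
  - replace (0 / (0 + I)) with 0 by (field; lra). ring.
  - replace (I / (0 + I)) with 1 by (field; lra). unfold I. field. lra.
  - rewrite HS.
    assert (r * (1 - z / K) * z = z * (qz * (n + p * z))) by (rewrite Hq; ring).
    rewrite H. replace (z * (qz * (n + p * z))) with (N * (n + p * z)) by (unfold N; ring).
    rewrite <- Heq. ring.
  - replace (N + M) with z by lra.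
    replace (- n * N - p * N * z + beta * M * I + delta * M * N - e * N * 0)
      with (M * (beta * I + delta * N) - N * (n + p * z)) by ring.
    rewrite Heq. ring.
Qed.
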